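(* Let $v_1\ge v_2>0$, $m\in\mathbb{Z}_{\ge1}$ and $0<b<m$. If a strategy profile $(X,Y)$ with $\mathbf{E}(X)=m$ and $\mathbf{E}(Y)=b$ is a Nash equilibrium of the discrete all-pay auction with valuations $v_1,v_2$, then $Y=\left(1-\frac bm\right)\delta_0+\frac bm Z$, where: (a) if $m=1$: $Z=\lambda_{\mathrm{O}}U_{\mathrm{O}}^1+\lambda_{\mathrm{E}}U_{\mathrm{E}}^1$ with $\lambda_{\mathrm{O}},\lambda_{\mathrm{E}}\ge0$, $\lambda_{\mathrm{O}}+\lambda_{\mathrm{E}}=1$, $\frac{\lambda_{\mathrm{E}}}{2}\ge1-\frac{2}{bv_1}$ and $\frac{\lambda_{\mathrm{E}}}{2}\le\frac1b-\frac{2}{bv_1}$; (b) if $m\ge2$: $Z=\lambda_{\mathrm{O}}U_{\mathrm{O}}^m+\lambda_{\mathrm{E}}U_{\mathrm{E}}^m+\lambda_{\mathrm{O}\uparrow1}U_{\mathrm{O}\uparrow1}^m+\sum_{j=1}^{m-1}\lambda_jW_j^m$ with $\lambda_{\mathrm{O}},\lambda_{\mathrm{E}},\lambda_{\mathrm{O}\uparrow1},\lambda_1,\dots,\lambda_{m-1}\ge0$, $\lambda_{\mathrm{O}}+\lambda_{\mathrm{E}}+\lambda_{\mathrm{O}\uparrow1}+\sum_{j=1}^{m-1}\lambda_j=1$, $\frac{\lambda_{\mathrm{E}}}{m+1}+\frac{1}{2m}\sum_{j=1}^{m-1}\lambda_j\le\frac mb\left(1-\frac{v_2}{v_1}\right)$,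 $\frac{\lambda_{\mathrm{O}}}{m}+\frac{\lambda_{\mathrm{E}}}{m+1}+\frac{\lambda_{\mathrm{O}\uparrow1}}{m-1}+\frac{1}{m}\sum_{j=1}^{m-1}\lambda_j=\frac{2m}{bv_1}$, and, in the case $b>m-1$, $\frac{1}{2m}\sum_{j=1}^{m-1}\lambda_j+\frac{\lambda_{\mathrm{O}\uparrow1}}{m-1}\le\frac{m-b}{b}$.
   Context: Discrete all-pay auction: two players, 1 and 2, value a prize at $v_1$ and $v_2$ respectively, where $v_1\ge v_2>0$. A (mixed) strategy is a probability distribution on $\mathbb{Z}_{\ge 0}$ with finite mean, identified with a $\mathbb{Z}_{\ge0}$-valued random variable; the two players' choices are independent. If player 1 uses $X$ and player 2 uses $Y$, the expected payoffs are $P^1(X,Y)=v_1\Pr(X>Y)+\frac{v_1}{2}\Pr(X=Y)-\mathbf{E}(X)$ and $P^2(Y,X)=v_2\Pr(Y>X)+\frac{v_2}{2}\Pr(X=Y)-\mathbf{E}(Y)$. A Nash equilibrium of the all-pay auction is a pair $(X,Y)$ with $P^1(X,Y)\ge P^1(X',Y)$ and $P^2(Y,X)\ge P^2(Y',X)$ for all strategies $X',Y'$. $\delta_j$ denotes the point mass at $j$; $\lambda A+(1-\lambda)B$ denotes the mixture of distributions $A$ and $B$ (similarly for longer convex combinations). Special distributions: for $m\ge1$, $U_{\mathrm{O}}^m$ is the uniform distribution on $\{1,3,\dots,2m-1\}$; for $m\ge0$, $U_{\mathrm{E}}^m$ is the uniform distribution on $\{0,2,\dots,2m\}$; for $m\ge2$,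 $U_{\mathrm{O}\uparrow1}^m$ is the uniform distribution on $\{2,4,\dots,2m-2\}$; for $m\ge2$ and $1\le j\le m-1$, $W_j^m=\frac{1}{2m}\delta_0+\sum_{i=1}^{j-1}\frac1m\delta_{2i}+\frac{1}{2m}\delta_{2j}+\sum_{i=j+1}^{m}\frac1m\delta_{2i-1}$. *)

(* Defs.v *)
From Stdlib Require Import Reals Lra Lia Arith Bool.
From Coquelicot Require Import Coquelicot.
Open Scope R_scope.
Open Scope bool_scope.

Fixpoint sumR (n : nat) (f : nat -> R) : R :=
  match n with
  | O => 0
  | S k => sumR k f + f k
  end.

(* A mixed strategy: a probability distribution on Z_{>=0} with finite mean,
   given by its probability mass function p : nat -> R. *)
Definition strategy (p : nat -> R) : Prop :=
  (forall n, 0 <= p n) /\ is_series p 1 /\ ex_series (fun n => INR n * p n).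

Definition mean (p : nat -> R) : R := Series (fun n => INR n * p n).

(* Pr(X > Y) = sum_i Pr(X = i) Pr(Y < i) *)
Definition prob_gt (p q : nat -> R) : R := Series (fun i => p i * sumR i q).
Definition prob_eq (p q : nat -> R) : R := Series (fun i => p i * q i).

Definition payoff (v : R) (p q : nat -> R) : R :=
  v * prob_gt p q + v / 2 * prob_eq p q - mean p.

Definition nash (v1 v2 : R) (p q : nat -> R) : Prop :=
  strategy p /\ strategy q /\
  (forall p', strategy p' -> payoff v1 p q >= payoff v1 p' q) /\
  (forall q', strategy q' -> payoff v2 q p >= payoff v2 q' p).

Definition delta (j : nat) (k : nat) : R := if Nat.eqb k j then 1 else 0.

Definition U_O (m : nat) (k : nat) : R :=
  if Nat.odd k && Nat.leb k (2 * m - 1) then / INR m else 0.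
Definition U_E (m : nat) (k : nat) : R :=
  if Nat.even k && Nat.leb k (2 * m) then / INR (m + 1) else 0.
Definition U_Oup1 (m : nat) (k : nat) : R :=
  if Nat.even k && Nat.leb 2 k && Nat.leb k (2 * m - 2) then / INR (m - 1) else 0.
(* W_j^m = 1/(2m) d_0 + sum_{i=1}^{j-1} 1/m d_{2i} + 1/(2m) d_{2j}
          + sum_{i=j+1}^m 1/m d_{2i-1} *)
Definition W (m j : nat) (k : nat) : R :=
  if Nat.eqb k 0 then / (2 * INR m)
  else if Nat.even k && Nat.leb 2 k && Nat.leb k (2 * j - 2) then / INR m
  else if Nat.eqb k (2 * j) then / (2 * INR m)
  else if Nat.odd k && Nat.leb (2 * j + 1) k && Nat.leb k (2 * m - 1) then / INR m
  else 0.

(* Main.v *)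
Require Import Defs.
From Stdlib Require Import Reals Lra Lia.
From Coquelicot Require Import Coquelicot.
Open Scope R_scope.

Lemma sum_n_sumR (a : nat -> R) n : sum_n a n = sumR (S n) a.
Proof.
  induction n as [|n IH].
  - rewrite sum_O. simpl. ring.
  - rewrite sum_Sn, IH. simpl. unfold plus. simpl. ring.
Qed.

Lemma sumR_ext (f g : nat -> R) n : (forall i, (i < n)%nat -> f i = g i) -> sumR n f = sumR n g.
Proof.
  induction n as [|n IH]; intros H; simpl; auto.
  rewrite IH by (intros; apply H; lia). rewrite H by lia. ring.
Qed.

Lemma sumR_nonneg (f : nat -> R) n : (forall i, (i < n)%nat -> 0 <= f i) -> 0 <= sumR n f.
Proof.
  induction n as [|n IH]; intros H; simpl. lra.
  assert (0 <= f n) by (apply H; lia). assert (0 <= sumR n f) by (apply IH; intros; apply H; lia). lra.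
Qed.

Lemma sumR_zero (f : nat -> R) n : (forall i, (i < n)%nat -> f i = 0) -> sumR n f = 0.
Proof.
  intros H. rewrite (sumR_ext f (fun _ => 0)) by auto. clear H.
  induction n; simpl; lra.
Qed.

Lemma sumR_term (f : nat -> R) n j : (forall i, (i < n)%nat -> 0 <= f i) -> (j < n)%nat -> f j <= sumR n f.
Proof.
  induction n as [|n IH]; intros H Hj. lia. simpl.
  assert (0 <= f n) by (apply H; lia).
  destruct (Nat.eq_dec j n) as [->|Hne].
  - assert (0 <= sumR n f) by (apply sumR_nonneg; intros; apply H; lia). lra.
  - assert (f j <= sumR n f) by (apply IH; [intros; apply H; lia| lia]). lra.
Qed.

Lemma sumR_plus (f g : nat -> R) n : sumR n (fun i => f i + g i) = sumR n f + sumR n g.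
Proof. induction n; simpl; [ring| rewrite IHn; ring]. Qed.

Lemma sumR_minus (f g : nat -> R) n : sumR n (fun i => f i - g i) = sumR n f - sumR n g.
Proof. induction n; simpl; [ring| rewrite IHn; ring]. Qed.

Lemma sumR_scal (c : R) (f : nat -> R) n : sumR n (fun i => c * f i) = c * sumR n f.
Proof. induction n; simpl; [ring| rewrite IHn; ring]. Qed.

Lemma sumR_split (f : nat -> R) a d : sumR (a + d) f = sumR a f + sumR d (fun i => f (a + i)%nat).
Proof.
  induction d as [|d IH]; simpl.
  - rewrite Nat.add_0_r. ring.
  - rewrite Nat.add_succ_r. cbn [sumR]. rewrite IH. ring.
Qed.

Lemma is_series_fin (f : nat -> R) N : (forall k, (N <= k)%nat -> f k = 0) -> is_series f (sumR N f).
Proof.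
  intros H. unfold is_series.
  apply filterlim_ext_loc with (fun _ => sumR N f).
  - exists N. intros n Hn. rewrite sum_n_sumR.
    replace (S n) with (N + (S n - N))%nat by lia. rewrite sumR_split.
    rewrite (sumR_zero _ (S n - N)). ring. intros; apply H; lia.
  - apply filterlim_const.
Qed.

Lemma Series_fin (f : nat -> R) N : (forall k, (N <= k)%nat -> f k = 0) -> Series f = sumR N f.
Proof. intros H. apply is_series_unique. now apply is_series_fin. Qed.

Lemma is_series_partial (a : nat -> R) l : (forall n, 0 <= a n) -> is_series a l -> forall n, sumR n a <= l.
Proof.
  intros Hpos Hs n.
  assert (Hl : is_lim_seq (sum_n a) l) by exact Hs.
  assert (Rbar_le (sumR n a) l).
  { apply is_lim_seq_le_loc with (fun _ => sumR n a) (sum_n a); auto.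
    - exists n. intros k Hk. rewrite sum_n_sumR.
      replace (S k) with (n + (S k - n))%nat by lia. rewrite sumR_split.
      assert (0 <= sumR (S k - n) (fun i => a (n + i)%nat)) by (apply sumR_nonneg; auto). lra.
    - apply is_lim_seq_const. }
  exact H.
Qed.

Lemma is_series_term (a : nat -> R) l : (forall n, 0 <= a n) -> is_series a l -> forall n, a n <= l.
Proof.
  intros Hpos Hs n. eapply Rle_trans; [|apply (is_series_partial a l Hpos Hs (S n))].
  apply sumR_term; auto.
Qed.

Definition Apay (v : R) (q : nat -> R) (k : nat) : R := v * (sumR k q + q k / 2) - INR k.

Lemma delta_ne j i : i <> j -> delta j i = 0.
Proof. intros H. unfold delta. destruct (Nat.eqb_spec i j); [lia|reflexivity]. Qed.
Lemma delta_eq j : delta j j = 1.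
Proof. unfold delta. rewrite Nat.eqb_refl. reflexivity. Qed.

Lemma Series_point (f : nat -> R) k : (forall i, i <> k -> f i = 0) -> Series f = f k.
Proof.
  intros H. rewrite (Series_fin f (S k)) by (intros; apply H; lia).
  simpl. rewrite sumR_zero by (intros; apply H; lia). ring.
Qed.

Lemma strategy_delta k : strategy (delta k).
Proof.
  split; [|split].
  - intros n. unfold delta. destruct (Nat.eqb n k); lra.
  - replace 1 with (sumR (S k) (delta k)).
    + apply is_series_fin. intros; apply delta_ne; lia.
    + simpl. rewrite delta_eq. rewrite sumR_zero by (intros; apply delta_ne; lia). ring.
  - exists (sumR (S k) (fun n => INR n * delta k n)). apply is_series_fin.
    intros; rewrite delta_ne by lia; ring.
Qed.

Lemma payoff_delta v q k : payoff v (delta k) q = Apay v q k.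
Proof.
  unfold payoff, prob_gt, prob_eq, mean, Apay.
  rewrite (Series_point _ k) by (intros; rewrite delta_ne by lia; ring).
  rewrite (Series_point (fun i => delta k i * q i) k) by (intros; rewrite delta_ne by lia; ring).
  rewrite (Series_point (fun n => INR n * delta k n) k) by (intros; rewrite delta_ne by lia; ring).
  rewrite delta_eq. field.
Qed.

Lemma strat_sum_le1 q : strategy q -> forall n, sumR n q <= 1.
Proof. intros [H1 [H2 _]]. apply is_series_partial; auto. Qed.

Lemma strat_sum_nonneg q : strategy q -> forall n, 0 <= sumR n q.
Proof. intros [H1 _] n. apply sumR_nonneg; auto. Qed.


Lemma exs_scal (c : R) (a : nat -> R) : ex_series a -> ex_series (fun n => c * a n).
Proof. intros H. apply ex_series_ext with (fun n => scal c (a n)). intros; reflexivity. apply (@ex_series_scal_l R_AbsRing R_NormedModule); auto. Qed.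
Lemma exs_plus (a b : nat -> R) : ex_series a -> ex_series b -> ex_series (fun n => a n + b n).
Proof. intros H1 H2. apply ex_series_ext with (fun n => plus (a n) (b n)). intros; reflexivity. apply (@ex_series_plus R_AbsRing R_NormedModule); auto. Qed.
Lemma exs_minus (a b : nat -> R) : ex_series a -> ex_series b -> ex_series (fun n => a n - b n).
Proof. intros H1 H2. apply ex_series_ext with (fun n => plus (a n) (opp (b n))). intros; reflexivity. apply (@ex_series_minus R_AbsRing R_NormedModule); auto. Qed.

Lemma BR (v : R) (p q : nat -> R) :
  v > 0 -> strategy p -> strategy q ->
  (forall p', strategy p' -> payoff v p q >= payoff v p' q) ->
  (forall k, Apay v q k <= payoff v p q) /\ (exists N, forall k, (N <= k)%nat -> p k = 0).
Proof.
  intros Hv Hp Hq Hbr.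
  assert (HA : forall k, Apay v q k <= payoff v p q).
  { intros k. rewrite <- payoff_delta. apply Rge_le, Hbr, strategy_delta. }
  split; auto.
  destruct Hp as [Hp0 [Hp1 Hp2]].
  assert (Hq0 : forall n, 0 <= q n) by (destruct Hq; auto).
  assert (Hql : forall n, sumR n q <= 1) by (apply strat_sum_le1; auto).
  assert (Hqn : forall n, 0 <= sumR n q) by (apply strat_sum_nonneg; auto).
  assert (Hqt : forall n, q n <= 1).
  { intros n. destruct Hq as [_ [Hq1 _]]. apply (is_series_term q 1); auto. }
  set (u := payoff v p q).
  assert (E1 : ex_series (fun i => p i * sumR i q)).
  { apply (@ex_series_le R_AbsRing R_CompleteNormedModule) with p; [| exists 1; auto].
    intros n. change (norm (p n * sumR n q)) with (Rabs (p n * sumR n q)).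
    rewrite Rabs_pos_eq by (apply Rmult_le_pos; auto).
    specialize (Hp0 n). specialize (Hql n). nra. }
  assert (E2 : ex_series (fun i => p i * q i)).
  { apply (@ex_series_le R_AbsRing R_CompleteNormedModule) with p; [| exists 1; auto].
    intros n. change (norm (p n * q n)) with (Rabs (p n * q n)).
    rewrite Rabs_pos_eq by (apply Rmult_le_pos; auto).
    specialize (Hp0 n). specialize (Hqt n). nra. }
  assert (Ep : ex_series p) by (exists 1; auto).
  assert (Hsp : Series p = 1) by (apply is_series_unique; auto).
  assert (Hu : Series (fun k => p k * (u - Apay v q k)) = 0).
  { transitivity (u * Series p - (v * Series (fun i => p i * sumR i q)
        + v / 2 * Series (fun i => p i * q i) - Series (fun n => INR n * p n))).
    - rewrite <- !Series_scal_l.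
      assert (X1 : ex_series (fun n => v * (p n * sumR n q))) by (apply exs_scal; auto).
      assert (X2 : ex_series (fun n => v / 2 * (p n * q n))) by (apply exs_scal; auto).
      assert (X3 : ex_series (fun n => u * p n)) by (apply exs_scal; auto).
      rewrite <- Series_plus by auto.
      rewrite <- Series_minus by (auto; apply exs_plus; auto).
      rewrite <- Series_minus by (auto; apply exs_minus; auto; apply exs_plus; auto).
      apply Series_ext. intros n. unfold Apay. field.
    - rewrite Hsp. unfold u, payoff, prob_gt, prob_eq, mean. field. }
  assert (Hnn : forall k, 0 <= p k * (u - Apay v q k)).
  { intros k. apply Rmult_le_pos; auto. specialize (HA k). fold u in HA. lra. }
  assert (Hex : ex_series (fun k => p k * (u - Apay v q k))).
  { apply ex_series_ext with (fun n => u * p n - (v * (p n * sumR n q) + v / 2 * (p n * q n) - INR n * p n)).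
    - intros n. unfold Apay. match goal with |- ?a = ?b => change (@eq R a b) end. field.
    - apply exs_minus. apply exs_scal; auto. apply exs_minus; auto. apply exs_plus; apply exs_scal; auto. }
  assert (Hz : forall k, p k * (u - Apay v q k) = 0).
  { intros k. apply Rle_antisym; auto.
    rewrite <- Hu. apply (is_series_term (fun k => p k * (u - Apay v q k))); auto.
    apply Series_correct; auto. }
  destruct (INR_unbounded v) as [N HN]. exists N. intros k Hk.
  assert (HkN : INR N <= INR k) by (apply le_INR; auto).
  assert (H0 : 0 <= u).
  { specialize (HA 0%nat). fold u in HA. unfold Apay in HA. simpl in HA.
    specialize (Hq0 0%nat). nra. }
  assert (HAk : Apay v q k < 0).
  { unfold Apay. specialize (Hql (S k)). simpl in Hql. specialize (Hq0 k). nra. }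
  specialize (Hz k). specialize (Hp0 k).
  destruct (Rle_lt_or_eq_dec 0 (p k) Hp0) as [Hlt|Heq]; [|auto].
  exfalso. assert (0 < p k * (u - Apay v q k)) by (apply Rmult_lt_0_compat; lra). lra.
Qed.

Lemma payoff_fin v p q N : (forall k, (N <= k)%nat -> p k = 0) ->
  payoff v p q = v * sumR N (fun i => p i * sumR i q) + v / 2 * sumR N (fun i => p i * q i)
                 - sumR N (fun n => INR n * p n).
Proof.
  intros H. unfold payoff, prob_gt, prob_eq, mean.
  rewrite (Series_fin _ N), (Series_fin (fun i => p i * q i) N), (Series_fin (fun n => INR n * p n) N);
  auto; intros k Hk; rewrite H by auto; ring.
Qed.

Lemma F1 p q N : sumR N (fun i => p i * sumR i q) + sumR N (fun i => q i * sumR i p)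
   + sumR N (fun i => p i * q i) = sumR N p * sumR N q.
Proof.
  induction N as [|N IH]; simpl. ring.
  nra.
Qed.

Lemma avg_lemma (f : nat -> R) m :
  sumR m (fun i => sumR (2*i+1) f + f (2*i+1)%nat / 2) = sumR (2*m) (fun k => f k * (INR m - INR k / 2)).
Proof.
  induction m as [|m IH]. simpl. ring.
  replace (2 * S m)%nat with (S (S (2*m)))%nat by lia.
  cbn [sumR]. rewrite IH.
  rewrite (sumR_ext (fun k => f k * (INR (S m) - INR k / 2)) (fun k => f k * (INR m - INR k / 2) + f k))
    by (intros; rewrite S_INR; ring).
  rewrite sumR_plus.
  replace (2*m+1)%nat with (S (2*m)) by lia. cbn [sumR].
  rewrite !S_INR, !mult_INR. simpl. field.
Qed.

Lemma odd_sum m : sumR m (fun i => INR (2*i+1)) = INR m * INR m.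
Proof.
  induction m as [|m IH]. simpl. ring.
  cbn [sumR]. rewrite IH. rewrite S_INR, plus_INR, mult_INR. simpl. ring.
Qed.

Lemma sumR_le_const (g : nat -> R) c n : (forall i, (i < n)%nat -> g i <= c) -> sumR n g <= INR n * c.
Proof.
  induction n as [|n IH]; intros H; simpl. lra.
  assert (g n <= c) by (apply H; lia). assert (sumR n g <= INR n * c) by (apply IH; intros; apply H; lia).
  destruct n; simpl in *; lra.
Qed.

Lemma sumR_nonneg_zero (g : nat -> R) n : (forall i, (i < n)%nat -> 0 <= g i) -> sumR n g = 0 ->
  forall i, (i < n)%nat -> g i = 0.
Proof.
  intros H Hs i Hi. apply Rle_antisym; auto. rewrite <- Hs. apply sumR_term; auto.
Qed.

Lemma lin_sum (f : nat -> R) M N :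
  sumR N (fun k => f k * (M - INR k / 2)) = M * sumR N f - / 2 * sumR N (fun k => INR k * f k).
Proof.
  rewrite <- !sumR_scal, <- sumR_minus. apply sumR_ext. intros; field.
Qed.

Lemma tail_lemma (f : nat -> R) m N : (2 * m <= N)%nat ->
  sumR N (fun k => f k * (INR m - INR k / 2)) =
  sumR (2*m) (fun k => f k * (INR m - INR k / 2)) - sumR (N - 2*m) (fun j => f (2*m + j)%nat * (INR j / 2)).
Proof.
  intros H. replace N with (2*m + (N - 2*m))%nat at 1 by lia. rewrite sumR_split.
  rewrite (sumR_ext (fun i => f (2*m+i)%nat * (INR m - INR (2*m+i) / 2)) (fun j => -1 * (f (2*m + j)%nat * (INR j / 2)))).
  - rewrite sumR_scal. ring.
  - intros i _. rewrite plus_INR, mult_INR. simpl. field.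
Qed.

Lemma core v1 v2 m b p q : v1 >= v2 -> v2 > 0 -> (1 <= m)%nat -> 0 < b -> b < INR m ->
  nash v1 v2 p q -> mean p = INR m -> mean q = b ->
  (forall k, (2*m < k)%nat -> q k = 0) /\ sumR (2*m+1) q = 1 /\
  (forall k, Apay v1 q k <= v1 * (1 - b / (2*INR m)) - INR m) /\
  (forall i, (i < m)%nat -> Apay v1 q (2*i+1) = v1 * (1 - b/(2*INR m)) - INR m) /\
  v2 <= 2 * INR m /\ (forall k, 0 <= q k).
Proof.
  intros Hv Hv2 Hm Hb HbM [Hp [Hq [Hbr1 Hbr2]]] Hmp Hmq.
  assert (Hv1 : v1 > 0) by lra.
  destruct (BR v1 p q Hv1 Hp Hq Hbr1) as [HA [N1 HN1]].
  destruct (BR v2 q p Hv2 Hq Hp Hbr2) as [HB [N2 HN2]].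
  set (N := (N1 + N2 + 2*m + 1)%nat).
  assert (Hpf : forall k, (N <= k)%nat -> p k = 0) by (intros; apply HN1; unfold N in *; lia).
  assert (Hqf : forall k, (N <= k)%nat -> q k = 0) by (intros; apply HN2; unfold N in *; lia).
  set (M := INR m) in *.
  assert (HM : 1 <= M) by (unfold M; replace 1 with (INR 1) by reflexivity; apply le_INR; auto).
  assert (Hq0 : forall k, 0 <= q k) by (destruct Hq; auto).
  assert (Hp0 : forall k, 0 <= p k) by (destruct Hp; auto).
  assert (Sp : sumR N p = 1).
  { destruct Hp as [_ [H _]]. rewrite <- (is_series_unique _ _ H). symmetry. apply Series_fin; auto. }
  assert (Sq : sumR N q = 1).
  { destruct Hq as [_ [H _]]. rewrite <- (is_series_unique _ _ H). symmetry. apply Series_fin; auto. }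
  assert (Mp : sumR N (fun n => INR n * p n) = M).
  { transitivity (mean p); [|exact Hmp]. unfold mean. symmetry. apply Series_fin. intros; rewrite Hpf by auto; ring. }
  assert (Mq : sumR N (fun n => INR n * q n) = b).
  { transitivity (mean q); [|exact Hmq]. unfold mean. symmetry. apply Series_fin. intros; rewrite Hqf by auto; ring. }
  set (u1 := payoff v1 p q) in *. set (u2 := payoff v2 q p) in *.
  assert (Hu1 : u1 = v1 * sumR N (fun i => p i * sumR i q) + v1 / 2 * sumR N (fun i => p i * q i) - M).
  { unfold u1. rewrite (payoff_fin v1 p q N) by auto. rewrite Mp. reflexivity. }
  assert (Hu2 : u2 = v2 * sumR N (fun i => q i * sumR i p) + v2 / 2 * sumR N (fun i => p i * q i) - b).
  { unfold u2. rewrite (payoff_fin v2 q p N) by auto. rewrite Mq.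
    rewrite (sumR_ext (fun i => q i * p i) (fun i => p i * q i)) by (intros; ring). reflexivity. }
  pose proof (F1 p q N) as HF. rewrite Sp, Sq in HF.
  set (G1 := sumR N (fun i => p i * sumR i q)) in *.
  set (G2 := sumR N (fun i => q i * sumR i p)) in *.
  set (E := sumR N (fun i => p i * q i)) in *.
  assert (H2mN : (2*m <= N)%nat) by (unfold N; lia).
  set (Wp := sumR (2*m) (fun k => p k * (M - INR k / 2))).
  set (Tp := sumR (N - 2*m) (fun j => p (2*m + j)%nat * (INR j / 2))).
  assert (HWp : Wp = M - M / 2 + Tp).
  { unfold Wp, Tp, M. pose proof (tail_lemma p m N H2mN) as T. rewrite lin_sum in T.
    rewrite Sp, Mp in T. unfold M in T. lra. }
  assert (HTp : 0 <= Tp).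
  { apply sumR_nonneg. intros j _. apply Rmult_le_pos; auto. pose proof (pos_INR j). lra. }
  assert (HSB : sumR m (fun i => Apay v2 p (2*i+1)) = v2 * Wp - M * M).
  { unfold Apay. rewrite sumR_minus, sumR_scal, avg_lemma, odd_sum. reflexivity. }
  assert (HSB2 : sumR m (fun i => Apay v2 p (2*i+1)) <= M * u2).
  { apply sumR_le_const. intros; apply HB. }
  assert (Hu2a : M * u2 >= v2 * (M / 2) - M * M) by nra.
  assert (Hu2b : 0 <= u2).
  { eapply Rle_trans; [|apply (HB 0%nat)]. unfold Apay. simpl. specialize (Hp0 0%nat). nra. }
  set (Wq := sumR (2*m) (fun k => q k * (M - INR k / 2))).
  set (Tq := sumR (N - 2*m) (fun j => q (2*m + j)%nat * (INR j / 2))).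
  assert (HWq : Wq = M - b / 2 + Tq).
  { unfold Wq, Tq, M. pose proof (tail_lemma q m N H2mN) as T. rewrite lin_sum in T.
    rewrite Sq, Mq in T. unfold M in T. lra. }
  assert (HTq : 0 <= Tq).
  { apply sumR_nonneg. intros j _. apply Rmult_le_pos; auto. pose proof (pos_INR j). lra. }
  assert (HSA : sumR m (fun i => Apay v1 q (2*i+1)) = v1 * Wq - M * M).
  { unfold Apay. rewrite sumR_minus, sumR_scal, avg_lemma, odd_sum. reflexivity. }
  assert (HSA2 : sumR m (fun i => Apay v1 q (2*i+1)) <= M * u1).
  { apply sumR_le_const. intros; apply HA. }
  assert (K1 : M * u2 >= b * (v2 / 2 - M)).
  { destruct (Rle_lt_dec 0 (v2 / 2 - M)).
    - assert (0 <= (M - b) * (v2/2 - M)) by (apply Rmult_le_pos; lra). nra.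
    - assert (0 <= M * u2) by nra. nra. }
  assert (K2 : M * (G2 + E / 2) >= b / 2).
  { assert (v2 * (M * (G2 + E/2)) >= v2 * (b / 2)) by (rewrite Hu2 in K1; nra).
    apply Rle_ge. apply (Rmult_le_reg_l v2); lra. }
  assert (K3 : M * u1 <= v1 * (M - b / 2) - M * M).
  { rewrite Hu1. assert (M * (G1 + E / 2) <= M - b / 2) by nra. nra. }
  assert (K4 : v1 * Tq <= 0) by nra.
  assert (HTq0 : Tq = 0).
  { apply Rle_antisym; auto. apply (Rmult_le_reg_l v1); lra. }
  assert (K5 : M * u1 = v1 * (M - b / 2) - M * M) by nra.
  assert (HU : u1 = v1 * (1 - b / (2 * M)) - M).
  { apply (Rmult_eq_reg_l M); [|lra]. rewrite K5. field. lra. }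
  assert (Hqz : forall k, (2*m < k)%nat -> q k = 0).
  { intros k Hk. destruct (Nat.lt_ge_cases k N) as [HkN|HkN]; [|auto].
    assert (Hz := sumR_nonneg_zero (fun j => q (2*m + j)%nat * (INR j / 2)) (N - 2*m)).
    specialize (Hz (fun j _ => Rmult_le_pos _ _ (Hq0 _) (Rmult_le_pos _ _ (pos_INR j) (Rlt_le _ _ (Rinv_0_lt_compat 2 Rlt_0_2)))) HTq0 (k - 2*m)%nat ltac:(lia)).
    assert (INR (k - 2*m) > 0) by (apply lt_0_INR; lia).
    destruct (Rmult_integral _ _ Hz) as [Hz1|Hz1]; [replace (2*m + (k - 2*m))%nat with k in Hz1 by lia; auto | lra]. }
  split; [|split; [|split; [|split; [|split]]]]; auto.
  - assert (Hsp : sumR N q = sumR (2*m+1) q + sumR (N-(2*m+1)) (fun i => q (2*m+1+i)%nat))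
      by (rewrite <- sumR_split; f_equal; lia).
    rewrite (sumR_zero _ (N - (2*m+1))) in Hsp. lra. intros; apply Hqz; lia.
  - intros k. rewrite <- HU. apply HA.
  - intros i Hi. rewrite <- HU.
    assert (Hs : sumR m (fun i => u1 - Apay v1 q (2*i+1)) = 0).
    { rewrite sumR_minus, HSA. rewrite (sumR_ext (fun _ => u1) (fun _ => u1 * 1)) by (intros; ring).
      rewrite sumR_scal.
      assert (Hc : forall n, sumR n (fun _ => 1) = INR n) by (induction n; cbn [sumR]; [simpl; ring| rewrite IHn, S_INR; ring]).
      rewrite Hc. fold M. rewrite HWq, HTq0. nra. }
    pose proof (sumR_nonneg_zero (fun i => u1 - Apay v1 q (2*i+1)) m (fun i _ => ltac:(pose proof (HA (2*i+1)%nat); cbv beta; lra)) Hs i Hi) as Hz.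
    cbv beta in Hz. lra.
  - assert (M * (G1 + E/2) = M - b/2).
    { apply (Rmult_eq_reg_l v1); [|lra]. rewrite Hu1 in K5. nra. }
    assert (M * u2 = b * v2 / 2 - b * M) by (rewrite Hu2; nra).
    nra.
Qed.


Lemma even_2n n : Nat.even (2*n) = true.
Proof. rewrite <- Nat.negb_odd, Nat.odd_even. reflexivity. Qed.
Lemma even_2n1 n : Nat.even (2*n+1) = false.
Proof. rewrite <- Nat.negb_odd, Nat.odd_odd. reflexivity. Qed.

Ltac bsimp := repeat (match goal with
 | |- context [Nat.eqb ?a ?b] => destruct (Nat.eqb_spec a b)
 | |- context [Nat.leb ?a ?b] => destruct (Nat.leb_spec a b)
 | |- context [Nat.ltb ?a ?b] => destruct (Nat.ltb_spec a b)
 end); cbn [andb]; try (exfalso; lia).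

Ltac par := rewrite ?even_2n, ?even_2n1, ?Nat.odd_odd, ?Nat.odd_even.

Lemma W_odd m i t : (t < m)%nat ->
  W m (S i) (2*t+1) = if Nat.ltb i t then / INR m else 0.
Proof. intros H. unfold W. par. bsimp; reflexivity. Qed.

Lemma W_even m i s : (i < m - 1)%nat -> (s < m - 1)%nat ->
  W m (S i) (2*(S s)) = if Nat.ltb i s then 0 else if Nat.eqb i s then / (2 * INR m) else / INR m.
Proof. intros H1 H2. unfold W. par. bsimp; try reflexivity.
  all: rewrite <- Nat.negb_even, even_2n; reflexivity. Qed.

Lemma W_zero m j : W m j 0 = / (2 * INR m).
Proof. reflexivity. Qed.

Lemma W_big m i k : (i < m - 1)%nat -> (2*m <= k)%nat -> W m (S i) k = 0.
Proof. intros H1 H2. unfold W. bsimp; try reflexivity; destruct (Nat.even k), (Nat.odd k); reflexivity. Qed.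

Lemma UO_odd m t : (t < m)%nat -> U_O m (2*t+1) = / INR m.
Proof. intros H. unfold U_O. par. bsimp. reflexivity. Qed.
Lemma UO_even m t : U_O m (2*t) = 0.
Proof. unfold U_O. par. reflexivity. Qed.
Lemma UO_big m k : (2*m <= k)%nat -> (1 <= m)%nat -> U_O m k = 0.
Proof. intros H H'. unfold U_O. bsimp. destruct (Nat.odd k); reflexivity. Qed.

Lemma UE_odd m t : U_E m (2*t+1) = 0.
Proof. unfold U_E. par. reflexivity. Qed.
Lemma UE_even m t : (t <= m)%nat -> U_E m (2*t) = / INR (m + 1).
Proof. intros H. unfold U_E. par. bsimp. reflexivity. Qed.
Lemma UE_big m k : (2*m < k)%nat -> U_E m k = 0.
Proof. intros H. unfold U_E. bsimp. destruct (Nat.even k); reflexivity. Qed.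

Lemma UOp_odd m t : U_Oup1 m (2*t+1) = 0.
Proof. unfold U_Oup1. par. reflexivity. Qed.
Lemma UOp_even m s : (s < m - 1)%nat -> U_Oup1 m (2*(S s)) = / INR (m - 1).
Proof. intros H. unfold U_Oup1. par. bsimp. reflexivity. Qed.
Lemma UOp_zero m : U_Oup1 m 0 = 0.
Proof. reflexivity. Qed.
Lemma UOp_big m k : (2*m - 1 <= k)%nat -> (1 <= m)%nat -> U_Oup1 m k = 0.
Proof. intros H H'. unfold U_Oup1. bsimp; destruct (Nat.even k); reflexivity. Qed.

Lemma sumR_cut (g : nat -> R) a t N : (t <= N)%nat ->
  sumR N (fun i => g i * (if Nat.ltb i t then a else 0)) = a * sumR t g.
Proof.
  intros H. replace N with (t + (N - t))%nat by lia. rewrite sumR_split.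
  rewrite (sumR_zero _ (N - t)).
  - rewrite <- sumR_scal, Rplus_0_r. apply sumR_ext. intros i Hi.
    destruct (Nat.ltb_spec i t); [ring|lia].
  - intros i _. destruct (Nat.ltb_spec (t + i) t); [lia|ring].
Qed.

Lemma sumR_mid (g : nat -> R) s N a c : (s < N)%nat ->
  sumR N (fun i => g i * (if Nat.ltb i s then 0 else if Nat.eqb i s then c else a)) =
  c * g s + a * (sumR N g - sumR (S s) g).
Proof.
  intros H.
  assert (HN : sumR N g = sumR (S s) g + sumR (N - S s) (fun i => g (S s + i)%nat))
    by (rewrite <- sumR_split; f_equal; lia).
  replace N with (S s + (N - S s))%nat at 1 by lia. rewrite sumR_split.
  cbn [sumR].
  rewrite (sumR_zero _ s) by (intros i Hi; destruct (Nat.ltb_spec i s); [ring|lia]).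
  destruct (Nat.ltb_spec s s); [lia|]. rewrite Nat.eqb_refl.
  rewrite (sumR_ext _ (fun i => a * g (S s + i)%nat)).
  - rewrite sumR_scal. rewrite HN. cbn [sumR]. ring.
  - intros i _. destruct (Nat.ltb_spec (S s + i) s); [lia|]. destruct (Nat.eqb_spec (S s + i) s); [lia|]. ring.
Qed.

Lemma tele (y : nat -> R) c K :
  (forall i, (i < K)%nat -> y (2*i+1)%nat + 2 * y (2*i+2)%nat + y (2*i+3)%nat = 2 * c) ->
  forall t, (t <= K)%nat -> sumR t (fun i => c - y (2*i+1)%nat - y (2*i+2)%nat) = (y (2*t+1)%nat - y 1%nat) / 2.
Proof.
  intros H t. induction t as [|t IH]; intros Ht.
  - simpl. field.
  - cbn [sumR]. rewrite IH by lia. replace (2 * S t + 1)%nat with (2*t+3)%nat by lia.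
    specialize (H t ltac:(lia)). lra.
Qed.

Lemma mul_eq_reg (v x y : R) : v > 0 -> v * x = v * y -> x = y.
Proof. intros H E. apply (Rmult_eq_reg_l v); lra. Qed.
Lemma mul_le_reg (v x y : R) : v > 0 -> v * x <= v * y -> x <= y.
Proof. intros H E. apply (Rmult_le_reg_l v); lra. Qed.

Theorem lemma2 (v1 v2 : R) (m : nat) (b : R) (p q : nat -> R) :
  v1 >= v2 -> v2 > 0 -> (1 <= m)%nat -> 0 < b -> b < INR m ->
  nash v1 v2 p q -> mean p = INR m -> mean q = b ->
  ((m = 1%nat) ->
    exists lO lE : R,
      0 <= lO /\ 0 <= lE /\ lO + lE = 1 /\
      lE / 2 >= 1 - 2 / (b * v1) /\
      lE / 2 <= 1 / b - 2 / (b * v1) /\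
      (forall k, q k = (1 - b / INR m) * delta 0 k
                        + b / INR m * (lO * U_O 1 k + lE * U_E 1 k))) /\
  ((2 <= m)%nat ->
    exists (lO lE lOup : R) (lam : nat -> R),
      0 <= lO /\ 0 <= lE /\ 0 <= lOup /\
      (forall j, (1 <= j <= m - 1)%nat -> 0 <= lam j) /\
      lO + lE + lOup + sumR (m - 1) (fun i => lam (S i)) = 1 /\
      lE / INR (m + 1) + / (2 * INR m) * sumR (m - 1) (fun i => lam (S i))
        <= INR m / b * (1 - v2 / v1) /\
      lO / INR m + lE / INR (m + 1) + lOup / INR (m - 1)
        + / INR m * sumR (m - 1) (fun i => lam (S i)) = 2 * INR m / (b * v1) /\
      (b > INR m - 1 ->
        / (2 * INR m) * sumR (m - 1) (fun i => lam (S i)) + lOup / INR (m - 1)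
          <= (INR m - b) / b) /\
      (forall k, q k = (1 - b / INR m) * delta 0 k
          + b / INR m * (lO * U_O m k + lE * U_E m k + lOup * U_Oup1 m k
                         + sumR (m - 1) (fun i => lam (S i) * W m (S i) k)))).
Proof.
  intros Hv Hv2 Hm Hb HbM Hn Hmp Hmq.
  destruct (core v1 v2 m b p q Hv Hv2 Hm Hb HbM Hn Hmp Hmq) as [HZ [HS [HAle [HAeq [Hv2m Hq0]]]]].
  assert (Hv1 : v1 > 0) by lra.
  split.
  - intros ->.
    replace (INR 1) with 1 in * by reflexivity.
    change (sumR 3 q = 1) in HS. cbn [sumR] in HS.
    pose proof (HAeq 0%nat ltac:(lia)) as A1. unfold Apay in A1. change (2*0+1)%nat with 1%nat in A1. cbn [sumR] in A1.
    replace (INR 1) with 1 in A1 by reflexivity.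
    pose proof (HAle 0%nat) as A0. unfold Apay in A0. cbn [sumR] in A0. replace (INR 0) with 0 in A0 by reflexivity.
    pose proof (HAle 2%nat) as A2. unfold Apay in A2. cbn [sumR] in A2. replace (INR 2) with 2 in A2 by (simpl; ring).
    assert (e1 : q 0%nat + q 1%nat / 2 = 1 - b / 2).
    { apply (mul_eq_reg v1); auto. replace (v1 * (1 - b/2)) with (v1 * (1 - b / (2*1)) - 1 + 1) by field. lra. }
    assert (e2 : b - 2 / v1 <= q 2%nat).
    { apply (mul_le_reg v1); auto. replace (v1 * (b - 2 / v1)) with (v1 * b - 2) by (field; lra).
      replace (v1 * (1 - b / (2 * 1)) - 1) with (v1 - v1 * b / 2 - 1) in A2 by field. nra. }
    assert (e3 : q 2%nat <= 1 - 2 / v1).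
    { apply (mul_le_reg v1); auto. replace (v1 * (1 - 2 / v1)) with (v1 - 2) by (field; lra).
      replace (v1 * (1 - b / (2 * 1)) - 1) with (v1 - v1 * b / 2 - 1) in A0 by field. nra. }
    pose proof (Hq0 0%nat). pose proof (Hq0 1%nat). pose proof (Hq0 2%nat).
    exists (q 1%nat / b), (2 * q 2%nat / b).
    split; [|split; [|split; [|split; [|split]]]].
    + apply Rmult_le_pos; auto. left; apply Rinv_0_lt_compat; auto.
    + apply Rmult_le_pos; [lra|]. left; apply Rinv_0_lt_compat; auto.
    + apply (mul_eq_reg b); auto. field_simplify; lra.
    + apply Rle_ge. replace (2 * q 2%nat / b / 2) with (q 2%nat / b) by (field; lra).
      replace (1 - 2 / (b * v1)) with ((b - 2 / v1) / b) by (field; lra).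
      unfold Rdiv. apply Rmult_le_compat_r; [left; apply Rinv_0_lt_compat|]; lra.
    + replace (2 * q 2%nat / b / 2) with (q 2%nat / b) by (field; lra).
      replace (1 / b - 2 / (b * v1)) with ((1 - 2 / v1) / b) by (field; lra).
      unfold Rdiv. apply Rmult_le_compat_r; [left; apply Rinv_0_lt_compat|]; lra.
    + intros k. destruct k as [|[|[|k]]].
      * unfold delta, U_O, U_E. simpl. field_simplify; [lra|lra].
      * unfold delta, U_O, U_E. simpl. field. lra.
      * unfold delta, U_O, U_E. simpl. field. lra.
      * rewrite HZ by lia. unfold delta, U_O, U_E. simpl.
        rewrite !Bool.andb_false_r. ring.
  - intros Hm2. destruct m as [|[|n]]; [lia|lia|].
    replace (S (S n) - 1)%nat with (S n) by lia.
    set (m := S (S n)) in *.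
    set (M := INR m) in *.
    assert (HMe : M = INR n + 2) by (unfold M, m; rewrite !S_INR; ring).
    pose proof (pos_INR n) as Hn0.
    assert (HM2 : 2 <= M) by lra.
    assert (HMp1 : INR (m + 1) = M + 1) by (unfold M; rewrite plus_INR; simpl; ring).
    assert (HMm1 : INR (S n) = M - 1) by (rewrite HMe, S_INR; ring).
    assert (HMm1' : INR (m - 1) = M - 1) by (unfold m; replace (S (S n) - 1)%nat with (S n) by lia; exact HMm1).
    set (c := 2 / v1).
    set (beta := b / M).
    set (r := M / b).
    set (U := v1 * (1 - b / (2 * M)) - M) in *.
    assert (Hc : 0 < c) by (unfold c; apply Rdiv_lt_0_compat; lra).
    assert (Hr : 0 < r) by (unfold r; apply Rdiv_lt_0_compat; lra).
    assert (Hbr : beta * r = 1) by (unfold beta, r; field; lra).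
    assert (Y1 : forall i, (i <= n)%nat -> q (2*i+1)%nat + 2 * q (2*i+2)%nat + q (2*i+3)%nat = 2 * c).
    { intros i Hi. pose proof (HAeq i ltac:(unfold m; lia)) as E0. pose proof (HAeq (S i) ltac:(unfold m; lia)) as E1.
      unfold Apay in E0, E1. replace (2 * S i + 1)%nat with (S (S (2*i+1))) in E1 by lia.
      cbn [sumR] in E1. rewrite !S_INR in E1.
      replace (S (S (2*i+1))) with (2*i+3)%nat in E1 by lia. replace (S (2*i+1)) with (2*i+2)%nat in E1 by lia.
      apply (mul_eq_reg v1); auto. replace (v1 * (2 * c)) with 4 by (unfold c; field; lra). lra. }
    assert (Y2 : forall i, (i <= S n)%nat -> q (2*i+1)%nat + q (2*i+2)%nat <= c).
    { intros i Hi. pose proof (HAeq i ltac:(unfold m; lia)) as E0. pose proof (HAle (2*i+2)%nat) as E1.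
      unfold Apay in E0, E1. replace (2 * i + 2)%nat with (S (2*i+1)) in E1 by lia.
      cbn [sumR] in E1. rewrite S_INR in E1. replace (S (2*i+1)) with (2*i+2)%nat in E1 by lia.
      apply (mul_le_reg v1); auto. replace (v1 * c) with 2 by (unfold c; field; lra). lra. }
    assert (Y3 : q 0%nat + q 1%nat / 2 = 1 - beta / 2 - (M - 1) * c / 2).
    { pose proof (HAeq 0%nat ltac:(unfold m; lia)) as E0. unfold Apay in E0.
      change (2*0+1)%nat with 1%nat in E0. cbn [sumR] in E0. replace (INR 1) with 1 in E0 by reflexivity.
      apply (mul_eq_reg v1); auto.
      replace (v1 * (1 - beta / 2 - (M - 1) * c / 2)) with (U + 1) by (unfold U, beta, c; field; lra). lra. }
    assert (Y4 : q (2*n+4)%nat + q (2*n+3)%nat / 2 = beta / 2 - (M - 1) * c / 2).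
    { pose proof (HAeq (S n) ltac:(unfold m; lia)) as E0. unfold Apay in E0.
      replace (2 * S n + 1)%nat with (2*n+3)%nat in E0 by lia.
      replace (2 * m + 1)%nat with (S (S (2*n+3))) in HS by (unfold m; lia). cbn [sumR] in HS.
      replace (S (2*n+3)) with (2*n+4)%nat in HS by lia.
      assert (HI : INR (2*n+3) = 2 * M - 1) by (rewrite HMe, plus_INR, mult_INR; simpl; ring).
      rewrite HI in E0.
      apply (mul_eq_reg v1); auto.
      replace (v1 * (beta / 2 - (M - 1) * c / 2)) with (v1 - 2 * M + 1 - U) by (unfold U, beta, c; field; lra).
      replace (sumR (2 * n + 3) q) with (1 - q (2*n+3)%nat - q (2*n+4)%nat) in E0 by lra. lra. }
    assert (Y5 : q 0%nat <= 2 - beta - M * c).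
    { pose proof (HAle 0%nat) as E0. unfold Apay in E0. cbn [sumR] in E0. replace (INR 0) with 0 in E0 by reflexivity.
      apply (mul_le_reg v1); auto.
      replace (v1 * (2 - beta - M * c)) with (2 * U) by (unfold U, beta, c; field; lra). lra. }
    assert (Y6 : v2 / v1 <= M * c).
    { unfold c. replace (M * (2 / v1)) with ((2 * M) / v1) by (field; lra).
      unfold Rdiv. apply Rmult_le_compat_r; [left; apply Rinv_0_lt_compat|]; lra. }
    set (lam := fun j => match j with 0%nat => 0 | S i => 2 * M * r * (c - q (2*i+1)%nat - q (2*i+2)%nat) end).
    assert (Htel : forall t, (t <= S n)%nat -> sumR t (fun i => lam (S i)) = M * r * (q (2*t+1)%nat - q 1%nat)).
    { intros t Ht. rewrite (sumR_ext _ (fun i => 2 * M * r * (c - q (2*i+1)%nat - q (2*i+2)%nat))) by (intros; reflexivity).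
      rewrite sumR_scal. rewrite (tele q c (S n)); [field| |lia].
      intros i Hi. apply Y1. lia. }
    assert (HS1 : sumR (S n) (fun i => lam (S i)) = M * r * (q (2*n+3)%nat - q 1%nat)).
    { rewrite Htel by lia. replace (2 * S n + 1)%nat with (2*n+3)%nat by lia. reflexivity. }
    exists (r * (M * q 1%nat)), (r * ((M + 1) * q (2*n+4)%nat)),
      (r * ((M - 1) * (c - q (2*n+3)%nat - q (2*n+4)%nat))), lam.
    pose proof (Hq0 1%nat). pose proof (Hq0 (2*n+4)%nat).
    assert (Hcc : 0 <= c - q (2*n+3)%nat - q (2*n+4)%nat).
    { pose proof (Y2 (S n) ltac:(lia)) as Z. replace (2 * S n + 1)%nat with (2*n+3)%nat in Z by lia.
      replace (2 * S n + 2)%nat with (2*n+4)%nat in Z by lia. lra. }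
    rewrite HMp1, HMm1, HS1.
    split; [|split; [|split; [|split; [|split; [|split; [|split; [|split]]]]]]].
    + apply Rmult_le_pos; [lra|]. apply Rmult_le_pos; lra.
    + apply Rmult_le_pos; [lra|]. apply Rmult_le_pos; lra.
    + apply Rmult_le_pos; [lra|]. apply Rmult_le_pos; lra.
    + intros j Hj. destruct j as [|i]; [lia|]. unfold lam.
      pose proof (Y2 i ltac:(lia)). apply Rmult_le_pos; [|lra]. apply Rmult_le_pos; lra.
    + transitivity (r * (q (2*n+3)%nat + 2 * q (2*n+4)%nat + (M - 1) * c)); [ring|].
      replace (q (2*n+3)%nat + 2 * q (2*n+4)%nat + (M - 1) * c) with beta by lra. lra.
    + replace (r * ((M + 1) * q (2*n+4)%nat) / (M + 1) + / (2 * M) * (M * r * (q (2*n+3)%nat - q 1%nat)))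
        with (r * (q (2*n+4)%nat + q (2*n+3)%nat / 2 - q 1%nat / 2)) by (field; lra).
      replace (M / b) with r by reflexivity.
      apply Rmult_le_compat_l; lra.
    + transitivity (r * c); [field; lra|]. unfold r, c. field. lra.
    + intros _.
      replace (/ (2 * M) * (M * r * (q (2*n+3)%nat - q 1%nat)) + r * ((M - 1) * (c - q (2*n+3)%nat - q (2*n+4)%nat)) / (M - 1))
        with (r * (c - q 1%nat / 2 - q (2*n+3)%nat / 2 - q (2*n+4)%nat)) by (field; lra).
      replace ((M - b) / b) with (r * (1 - beta)) by (unfold r, beta; field; lra).
      apply Rmult_le_compat_l; lra.
    + intros k. destruct (Nat.Even_or_Odd k) as [[t ->]|[t ->]].
      * destruct t as [|s].
        {
          rewrite delta_eq.
          replace (U_O m (2*0)) with 0 by reflexivity.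
          replace (U_E m (2*0)) with (/ (M + 1)) by (rewrite <- HMp1; reflexivity).
          replace (U_Oup1 m (2*0)) with 0 by reflexivity.
          rewrite (sumR_ext _ (fun i => / (2 * M) * lam (S i))) by (intros; change (2*0)%nat with 0%nat; rewrite W_zero; fold M; ring).
          rewrite sumR_scal, HS1. change (2*0)%nat with 0%nat.
          transitivity (1 - beta + q (2*n+4)%nat + (q (2*n+3)%nat - q 1%nat) / 2); [lra|].
          transitivity (1 - beta + beta * r * (q (2*n+4)%nat + (q (2*n+3)%nat - q 1%nat) / 2)).
          - rewrite Hbr. ring.
          - field. lra. }
        destruct (Nat.lt_ge_cases s (S n)) as [Hs|Hs].
        {
          rewrite delta_ne by lia. rewrite UO_even, UE_even by (unfold m; lia).
          rewrite UOp_even by (unfold m; lia). rewrite HMp1, HMm1'.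
          rewrite (sumR_ext _ (fun i => lam (S i) * (if Nat.ltb i s then 0 else if Nat.eqb i s then / (2 * M) else / M)))
            by (intros i Hi; rewrite W_even by (unfold m; lia); fold M; reflexivity).
          rewrite sumR_mid by lia. rewrite HS1, Htel by lia.
          replace (2 * S s)%nat with (2*s+2)%nat by lia. replace (2 * S s + 1)%nat with (2*s+3)%nat by lia.
          pose proof (Y1 s ltac:(lia)) as Z.
          transitivity (2 * c - q (2*s+1)%nat - q (2*s+2)%nat - q (2*s+3)%nat); [lra|].
          transitivity (beta * r * (2 * c - q (2*s+1)%nat - q (2*s+2)%nat - q (2*s+3)%nat)); [rewrite Hbr; ring|].
          replace (2*s+2+1)%nat with (2*s+3)%nat by lia. unfold lam. field. lra. }
        destruct (Nat.eq_dec s (S n)) as [->|Hs2].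
        {
          rewrite delta_ne by lia. rewrite UO_even, UE_even by (unfold m; lia).
          rewrite UOp_big by (unfold m; lia). rewrite HMp1.
          rewrite (sumR_zero _ (S n)) by (intros i Hi; rewrite W_big by (unfold m; lia); ring).
          replace (2 * S (S n))%nat with (2*n+4)%nat by lia.
          transitivity (beta * r * q (2*n+4)%nat); [rewrite Hbr; ring|]. field. lra. }
        {
          rewrite HZ by (unfold m; lia). rewrite delta_ne by lia.
          rewrite UO_big, UE_big, UOp_big by (unfold m; lia).
          rewrite (sumR_zero _ (S n)) by (intros i Hi; rewrite W_big by (unfold m; lia); ring).
          ring. }
      * destruct (Nat.lt_ge_cases t m) as [Ht|Ht].
        { rewrite delta_ne by lia. rewrite UO_odd by auto. rewrite UE_odd, UOp_odd. fold M.
          rewrite (sumR_ext _ (fun i => lam (S i) * (if Nat.ltb i t then / M else 0)))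
            by (intros i Hi; rewrite W_odd by auto; fold M; reflexivity).
          rewrite sumR_cut by (unfold m in Ht; lia). rewrite Htel by (unfold m in Ht; lia).
          transitivity (beta * r * q (2*t+1)%nat); [rewrite Hbr; ring|]. field. lra. }
        { rewrite HZ by (unfold m in *; lia). rewrite delta_ne by lia.
          rewrite UO_big, UE_big, UOp_big by (unfold m in *; lia).
          rewrite (sumR_zero _ (S n)) by (intros i Hi; rewrite W_big by (unfold m in *; lia); ring).
          ring. }
Qed.
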